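(* The poset $(P;\leq)$ defined below is not representable.
   Context: Let $P=\{p\}\cup\{p_{i_0,\ldots,i_n}: 0\le n<\omega,\ i_0,\ldots,i_n\in\omega\}$ (all these symbols distinct). Let $\le$ be the reflexive–transitive closure of the following strict relations: (0) for all $0\le j<i<\omega$: $p<p_i<p_j$; (E) for all $r\ge 0$, all $i_0,\ldots,i_{2r}\in\omega$, all $k\le i_{2r}$ and all $i<j<\omega$: $p_{i_0,\ldots,i_{2r},i}<p_{i_0,\ldots,i_{2r},j}<p_{i_0,\ldots,i_{2r-1},k}$ (for $r=0$ the last element is $p_k$); (O) for all $r\ge0$, all $i_0,\ldots,i_{2r+1}\in\omega$, all $k\le i_{2r+1}$ and all $j<i<\omega$: $p_{i_0,\ldots,i_{2r},k}<p_{i_0,\ldots,i_{2r+1},i}<p_{i_0,\ldots,i_{2r+1},j}$. This $\le$ is a partial order. A poset is representable if it is order-isomorphic to the poset of prime ideals (ordered by inclusion) of a bounded distributive lattice, equivalently iff there is a topology $\tau$ on it which is compact and such that whenever $x\not\ge y$ there is a clopen down-set containing $x$ but not $y$. *)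

(* Defs.v *)
From HB Require Import structures.
From mathcomp Require Import all_boot all_order.
From Stdlib Require Import Relation_Operators.
Set Implicit Arguments. Unset Strict Implicit. Unset Printing Implicit Defensive.

(** The carrier of the poset P: the point p, and the points p_{i_0,...,i_n}.
    [Pn i0 s] stands for p_{i0, s_0, ..., s_{m-1}}. *)
Inductive Pt : Type :=
| Pp : Pt
| Pn : nat -> seq nat -> Pt.

(** [pp t i] is the point p_{t, i}, i.e. p_{t_0,...,t_{m-1}, i}
    (for t = [::] this is p_i). Every p_{i_0..i_n} is [pp [:: i_0..i_{n-1}] i_n]. *)
Definition pp (t : seq nat) (i : nat) : Pt :=
  match t with
  | [::] => Pn i [::]
  | x :: s => Pn x (rcons s i)
  end.

(** The generating strict relations (0), (E), (O).  In (E) and (O) the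
    tuple (i_0,...,i_m) is written [rcons u l], so [l] is its last entry
    and [u] the tuple with the last entry removed. *)
Inductive gen : Pt -> Pt -> Prop :=
| gen0a (i : nat) : gen Pp (pp [::] i)
| gen0b (i j : nat) : j < i -> gen (pp [::] i) (pp [::] j)
(* (E): tuple (i_0,...,i_{2r}) = rcons u l of odd length, i.e. size u even *)
| genE1 (u : seq nat) (l i j : nat) :
    ~~ odd (size u) -> i < j -> gen (pp (rcons u l) i) (pp (rcons u l) j)
| genE2 (u : seq nat) (l k j : nat) :
    ~~ odd (size u) -> k <= l -> gen (pp (rcons u l) j) (pp u k)
(* (O): tuple (i_0,...,i_{2r+1}) = rcons u l of even length, i.e. size u odd *)
| genO1 (u : seq nat) (l k i : nat) :
    odd (size u) -> k <= l -> gen (pp u k) (pp (rcons u l) i)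
| genO2 (u : seq nat) (l i j : nat) :
    odd (size u) -> j < i -> gen (pp (rcons u l) i) (pp (rcons u l) j).

Definition Ple : Pt -> Pt -> Prop := clos_refl_trans Pt gen.

Local Open Scope order_scope.

Definition prime_ideal {d : Order.disp_t} {L : tbDistrLatticeType d}
  (I : L -> Prop) : Prop :=
  [/\ (forall x y : L, I y -> x <= y -> I x),
      I \bot,
      (forall x y : L, I x -> I y -> I (x `|` y)),
      ~ I \top
    & (forall x y : L, I (x `&` y) -> I x \/ I y)].

Definition representable (T : Type) (le : T -> T -> Prop) : Prop :=
  exists (d : Order.disp_t) (L : tbDistrLatticeType d) (f : T -> L -> Prop),
    [/\ (forall x, prime_ideal (f x)),
        (forall I : L -> Prop, prime_ideal I -> exists x, forall a, I a <-> f x a)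
      & (forall x y, le x y <-> (forall a, f x a -> f y a))].

(* Main.v *)
Require Import Defs.
From mathcomp Require Import all_boot all_order.
From Stdlib Require Import Relation_Operators Lia Classical ClassicalEpsilon FunctionalExtensionality PropExtensionality.

Definition key (x : Pt) : seq nat := match x with Pp => [::] | Pn a s => a :: s end.
Lemma key_pp t i : key (pp t i) = rcons t i.
Proof. by case: t. Qed.
Lemma key_inj x y : key x = key y -> x = y.
Proof. by case: x; case: y => //= a s b r [-> ->]. Qed.

Lemma rt_st a b : gen a b -> Ple a b.
Proof. exact: rt_step. Qed.
Lemma Ple_trans a b c : Ple a b -> Ple b c -> Ple a c.
Proof. exact: rt_trans. Qed.

Lemma chain_up (g : nat -> Pt) : (forall n, Ple (g n) (g n.+1)) ->
  forall k l, k <= l -> Ple (g k) (g l).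
Proof.
move=> H k; elim=> [|l IH]; first by rewrite leqn0 => /eqP ->; apply: rt_refl.
rewrite leq_eqVlt => /orP [/eqP ->|]; first exact: rt_refl.
move=> /IH h; exact: Ple_trans h (H l).
Qed.

Lemma chain_dn (g : nat -> Pt) : (forall n, Ple (g n.+1) (g n)) ->
  forall k l, k <= l -> Ple (g l) (g k).
Proof.
move=> H k; elim=> [|l IH]; first by rewrite leqn0 => /eqP ->; apply: rt_refl.
rewrite leq_eqVlt => /orP [/eqP ->|]; first exact: rt_refl.
move=> /IH h; exact: Ple_trans (H l) h.
Qed.

Lemma Sinc v k l : odd (size v) -> k <= l -> Ple (pp v k) (pp v l).
Proof.
case/lastP: v => [//|u x]; rewrite size_rcons /= => hu.
apply: (chain_up (fun n => pp (rcons u x) n)) => n.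
by apply: rt_st; apply: genE1.
Qed.

Lemma Sdec v k l : ~~ odd (size v) -> k <= l -> Ple (pp v l) (pp v k).
Proof.
case/lastP: v => [|u x]; rewrite ?size_rcons /= => hu.
  apply: (chain_dn (fun n => pp [::] n)) => n.
  by apply: rt_st; apply: gen0b.
apply: (chain_dn (fun n => pp (rcons u x) n)) => n.
by apply: rt_st; apply: genO2; rewrite // -(negbK (odd _)).
Qed.

Lemma child_le v i j : ~~ odd (size v) -> Ple (pp (rcons v i) j) (pp v i).
Proof. by move=> h; apply: rt_st; apply: genE2. Qed.
Lemma child_ge v i j : odd (size v) -> Ple (pp v i) (pp (rcons v i) j).
Proof. by move=> h; apply: rt_st; apply: genO1. Qed.
Lemma rcons_neq0 (s : seq nat) x : rcons s x <> [::].
Proof. by case: s. Qed.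
Lemma rcons_neqs (s : seq nat) x : rcons s x <> s.
Proof. move/(congr1 size); rewrite size_rcons; lia. Qed.
Lemma rcons_neqs2 (s : seq nat) x y : rcons (rcons s x) y <> s.
Proof. move/(congr1 size); rewrite !size_rcons; lia. Qed.

Lemma key_Pp : key Pp = [::]. Proof. by []. Qed.
Ltac nlia := repeat match goal with H : is_true (_ <= _) |- _ => move/leP: H => H end; apply/leP; lia.
Ltac flia := exfalso; repeat match goal with H : is_true (_ <= _) |- _ => move/leP: H => H end; lia.
Ltac closeSU := first [ by left; eexists; split; [|reflexivity]; nlia
  | by right; left; do 2 eexists; split; [|reflexivity]; nlia
  | by right; right; eexists; split; [|reflexivity]; nlia ].
Ltac rcsimp :=
  repeat match goal with
  | H : rcons _ _ = [::] |- _ => by case: (rcons_neq0 _ _ H)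
  | H : [::] = rcons _ _ |- _ => by case: (rcons_neq0 _ _ (esym H))
  | H : rcons ?s _ = ?s |- _ => by case: (rcons_neqs _ _ H)
  | H : ?s = rcons ?s _ |- _ => by case: (rcons_neqs _ _ (esym H))
  | H : rcons (rcons ?s _) _ = ?s |- _ => by case: (rcons_neqs2 _ _ _ H)
  | H : ?s = rcons (rcons ?s _) _ |- _ => by case: (rcons_neqs2 _ _ _ (esym H))
  | H : rcons _ _ = rcons _ _ |- _ => case/rcons_inj: H; intros
  | H : ?x = ?y |- _ => (subst x || subst y)
  end.

Definition SU v i j z := (exists k, j <= k /\ key z = rcons (rcons v i) k) \/
  (exists k m, j <= k /\ key z = rcons (rcons (rcons v i) k) m) \/
  (exists k, k <= i /\ key z = rcons v k).

Lemma up_step v i j a b : ~~ odd (size v) -> gen a b -> SU v i j a -> SU v i j b.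
Proof.
move=> hv; case=> [i0 | i0 j0 lt | u l i0 j0 hu lt | u l k0 j0 hu le | u l k0 i0 hu le | u l i0 j0 hu lt];
 rewrite /SU ?key_pp;
 (case=> [[k [hk E]] | [[k [m [hk E]]] | [k [hk E]]]]); rewrite ?key_pp ?key_Pp in E; rcsimp.
all: try (move: hv hu; rewrite ?size_rcons /= ?negbK; by case: (odd _)).
all: try (move: hv; rewrite ?size_rcons /= ?negbK; by case: (odd _)).
all: try closeSU.
Qed.


Lemma down_step v i j a b : odd (size v) -> gen a b -> SU v i j b -> SU v i j a.
Proof.
move=> hv; case=> [i0 | i0 j0 lt | u l i0 j0 hu lt | u l k0 j0 hu le | u l k0 i0 hu le | u l i0 j0 hu lt];
 rewrite /SU ?key_pp;
 (case=> [[k [hk E]] | [[k [m [hk E]]] | [k [hk E]]]]); rewrite ?key_pp ?key_Pp in E; rcsimp.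
all: try (move: hv hu; rewrite ?size_rcons /= ?negbK; by case: (odd _)).
all: try (move: hv; rewrite ?size_rcons /= ?negbK; by case: (odd _)).
all: try closeSU.
Qed.

Lemma up_closed v i j z : ~~ odd (size v) -> Ple (pp (rcons v i) j) z -> SU v i j z.
Proof.
move=> hv H.
have G : forall a b, Ple a b -> SU v i j a -> SU v i j b.
  move=> a b; elim=> [x y g|x|x y w _ h1 _ h2]; [exact: up_step| by [] |].
  by move=> ?; apply: h2; apply: h1.
apply: (G _ _ H); left; exists j; split => //; by rewrite key_pp.
Qed.

Lemma down_closed v i j z : odd (size v) -> Ple z (pp (rcons v i) j) -> SU v i j z.
Proof.
move=> hv H.
have G : forall a b, Ple a b -> SU v i j b -> SU v i j a.
  move=> a b; elim=> [x y g|x|x y w _ h1 _ h2]; [exact: down_step| by [] |].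
  by move=> ?; apply: h1; apply: h2.
apply: (G _ _ H); left; exists j; split => //; by rewrite key_pp.
Qed.

Lemma SU_all v i z : (forall j, SU v i j z) -> exists k, k <= i /\ z = pp v k.
Proof.
move=> H; case: (H 0) => [[k [_ E]] | [[k [m [_ E]]] | [k [hk E]]]].
- case: (H k.+1) => [[k' [hk' E']] | [[k' [m' [_ E']]] | [k' [_ E']]]];
  rewrite E' in E; rcsimp; flia.
- case: (H k.+1) => [[k' [hk' E']] | [[k' [m' [hk' E']]] | [k' [_ E']]]];
  rewrite E' in E; rcsimp; flia.
- by exists k; split => //; apply: key_inj; rewrite key_pp.
Qed.

Lemma L1 v i z : ~~ odd (size v) -> (forall j, Ple (pp (rcons v i) j) z) -> Ple (pp v i) z.
Proof.
move=> hv H; case: (@SU_all v i z) => [j|k [hk ->]]; first exact: up_closed.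
exact: Sdec.
Qed.

Lemma L2 v i z : odd (size v) -> (forall j, Ple z (pp (rcons v i) j)) -> Ple z (pp v i).
Proof.
move=> hv H; case: (@SU_all v i z) => [j|k [hk ->]]; first exact: down_closed.
exact: Sinc.
Qed.

Lemma nrel_up v i j : ~~ odd (size v) -> ~ Ple (pp (rcons v i) j.+1) (pp (rcons v i) j).
Proof.
move=> hv H; have := up_closed _ _ _ _ hv H; rewrite /SU key_pp.
case=> [[k [hk E]] | [[k [m [_ E]]] | [k [_ E]]]]; rcsimp; flia.
Qed.

Lemma nrel_dn v i j : odd (size v) -> ~ Ple (pp (rcons v i) j) (pp (rcons v i) j.+1).
Proof.
move=> hv H; have := down_closed _ _ _ _ hv H; rewrite /SU key_pp.
case=> [[k [hk E]] | [[k [m [_ E]]] | [k [_ E]]]]; rcsimp; flia.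
Qed.

Definition incl {A : Type} (J1 J2 : A -> Prop) := forall x, J1 x -> J2 x.
Definition Un {A : Type} (I0 : A -> Prop) (C : (A -> Prop) -> Prop) : A -> Prop :=
  fun x => I0 x \/ exists J, C J /\ J x.

Inductive tower (A : Type) (g : (A -> Prop) -> (A -> Prop)) (I0 : A -> Prop) : (A -> Prop) -> Prop :=
| Ts J : tower A g I0 J -> tower A g I0 (g J)
| Tu (C : (A -> Prop) -> Prop) : (forall J, C J -> tower A g I0 J) -> tower A g I0 (@Un A I0 C).
Arguments tower {A} g I0 _.
Arguments Ts {A g I0} J _.
Arguments Tu {A g I0} C _.

Lemma pred_ext {A : Type} {J1 J2 : A -> Prop} : incl J1 J2 -> incl J2 J1 -> J1 = J2.
Proof.
move=> h1 h2; apply: functional_extensionality => x.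
apply: propositional_extensionality; split; [exact: h1|exact: h2].
Qed.

Section BWsec.
Context {A : Type} {g : (A -> Prop) -> (A -> Prop)} {I0 : A -> Prop}
  (ginf : forall J, incl J (g J)).

Lemma T_I0 {J} : tower g I0 J -> incl I0 J.
Proof.
elim=> [J' _ IH | C _ _] x hx; first by apply: ginf; apply: IH.
by left.
Qed.

Definition extreme c := forall x, tower g I0 x -> incl x c -> ~ incl c x -> incl (g x) c.

Lemma lemA {c} : tower g I0 c -> extreme c -> forall {x}, tower g I0 x -> incl x c \/ incl (g c) x.
Proof.
move=> Tc Ec x; elim=> [J TJ IH | C TC IH].
- case: IH => [hJc | hcJ].
  + case: (classic (incl c J)) => hcJ.
    * right; rewrite (pred_ext hJc hcJ) => y; exact.
    * by left; apply: Ec.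
  + by right => y /hcJ; apply: ginf.
- case: (classic (exists J, C J /\ incl (g c) J)) => [[J [CJ hJ]] | hn].
  + by right => y /hJ hy; right; exists J.
  + left => y [hy | [J [CJ hJ]]]; first exact: (T_I0 Tc y hy).
    case: (IH J CJ) => h; first exact: h y hJ.
    case: hn; by exists J.
Qed.

Lemma lemB {c} : tower g I0 c -> extreme c.
Proof.
elim=> [c' Tc IH | C TC IH].
- move=> x Tx hx hnx.
  case: (lemA Tc IH Tx) => [hxc | hcx]; last by case: hnx.
  case: (classic (incl c' x)) => hcx.
  + rewrite (pred_ext hxc hcx) => y; exact.
  + by move=> y /(IH x Tx hxc hcx) /ginf.
- move=> x Tx hx hnx.
  case: (classic (exists J, C J /\ ~ incl J x)) => [[J [CJ hJ]] | hn].
  + case: (lemA (TC J CJ) (IH J CJ) Tx) => [hxJ | hJx].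
    * by move=> y /(IH J CJ x Tx hxJ hJ) hy; right; exists J.
    * by case: hJ => y /ginf /hJx.
  + case: hnx => y [hy | [J [CJ hJ]]]; first exact: (T_I0 Tx y hy).
    apply: NNPP => hny; apply: hn; exists J; split => // h; apply: hny; exact: h.
Qed.

Lemma tower_chain x y : tower g I0 x -> tower g I0 y -> incl x y \/ incl y x.
Proof.
move=> Tx Ty; case: (lemA Ty (lemB Ty) Tx) => [h|h]; first by left.
by right => z /ginf /h.
Qed.
End BWsec.

Lemma BW (A : Type) (Good : (A -> Prop) -> Prop) (I0 : A -> Prop) :
  (forall C : (A -> Prop) -> Prop, (forall J, C J -> Good J) ->
     (forall J1 J2, C J1 -> C J2 -> incl J1 J2 \/ incl J2 J1) -> Good (Un I0 C)) ->
  exists J, Good J /\ forall J', Good J' -> incl J J' -> incl J' J.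
Proof.
move=> HU; apply: NNPP => Hn.
have H : forall J, exists J', incl J J' /\ (Good J -> Good J' /\ ~ incl J' J).
  move=> J; case: (classic (Good J)) => hG; last by exists J; split => // y.
  apply: NNPP => hn; apply: Hn; exists J; split => // J' hG' hJ.
  apply: NNPP => hnJ; apply: hn; exists J'; split => //.
pose g J := epsilon (inhabits J) (fun J' => incl J J' /\ (Good J -> Good J' /\ ~ incl J' J)).
have gP J : incl J (g J) /\ (Good J -> Good (g J) /\ ~ incl (g J) J).
  exact: (epsilon_spec (inhabits J) _ (H J)).
have ginf J : incl J (g J) by case: (gP J).
have TG J : tower g I0 J -> Good J.
  elim=> [J' _ IH | C TC IH]; first by case: (gP J') => _ /(_ IH) [].
  apply: HU => // J1 J2 h1 h2; exact: (tower_chain ginf _ _ (TC _ h1) (TC _ h2)).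
pose m := Un I0 (tower g I0).
have Tm : tower g I0 m by apply: Tu.
case: (gP m) => _ /(_ (TG _ Tm)) [_ hn]; apply: hn => y hy; right.
exists (g m); split => //; exact: Ts.
Qed.

Section PITsec.
Local Open Scope order_scope.
Import Order.TTheory.

Lemma PIT d (L : tbDistrLatticeType d) (I F : L -> Prop) :
  (forall x y : L, I y -> x <= y -> I x) -> I \bot -> (forall x y, I x -> I y -> I (x `|` y)) ->
  (forall x y : L, F x -> x <= y -> F y) -> F \top -> (forall x y, F x -> F y -> F (x `&` y)) ->
  (forall x, I x -> F x -> False) ->
  exists J, prime_ideal J /\ incl I J /\ (forall x, J x -> F x -> False).
Proof.
move=> Id Ib Ij Fu Ft Fm disj.
pose Good (J : L -> Prop) := [/\ (forall x y, J y -> x <= y -> J x),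
   (forall x y, J x -> J y -> J (x `|` y)), incl I J & (forall x, J x -> F x -> False)].
have [J [[Jd Jj IJ JF] Jmax]] : exists J, Good J /\ forall J', Good J' -> incl J J' -> incl J' J.
  apply: BW => C CG Cch; split.
  - move=> x y [hy|[J [CJ hJ]]] hxy; first by left; exact: Id hxy.
    by right; exists J; split => //; case: (CG J CJ) => hd _ _ _; exact: hd hxy.
  - move=> x y [hx|[J1 [C1 h1]]] [hy|[J2 [C2 h2]]].
    + by left; apply: Ij.
    + right; exists J2; split => //; case: (CG J2 C2) => _ hj hI _; apply: hj => //; exact: hI.
    + right; exists J1; split => //; case: (CG J1 C1) => _ hj hI _; apply: hj => //; exact: hI.
    + case: (Cch J1 J2 C1 C2) => hc.
      * right; exists J2; split => //; case: (CG J2 C2) => _ hj _ _; apply: hj => //; exact: hc.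
      * right; exists J1; split => //; case: (CG J1 C1) => _ hj _ _; apply: hj => //; exact: hc.
  - by move=> x hx; left.
  - move=> x [hx|[J [CJ hJ]]] hF; first exact: disj hx hF.
    by case: (CG J CJ) => _ _ _ hd; exact: hd hJ hF.
exists J; split; last by split.
have ext : forall a, ~ J a -> exists z j, [/\ F z, J j & z <= j `|` a].
  move=> a hna; apply: NNPP => hn.
  pose Ja := fun z => exists j, J j /\ z <= j `|` a.
  have GJa : Good Ja.
    split.
    - move=> x y [j [hj hyj]] hxy; exists j; split => //; exact: le_trans hxy hyj.
    - move=> x y [j1 [h1 l1]] [j2 [h2 l2]]; exists (j1 `|` j2); split; first exact: Jj.
      rewrite leUx; apply/andP; split.
        apply: (le_trans l1); apply: leU2 => //; exact: leUl.
      apply: (le_trans l2); apply: leU2 => //; exact: leUr.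
    - move=> x hx; exists x; split; [exact: IJ | exact: leUl].
    - move=> x [j [hj hxj]] hF; apply: hn; exists x, j; split => //.
  have hJJa : incl J Ja by move=> x hx; exists x; split => //; exact: leUl.
  apply: hna; apply: (Jmax Ja GJa hJJa); exists \bot; split; first exact: IJ.
  exact: leUr.
split => //.
- exact: IJ.
- move=> hT; exact: JF hT Ft.
- move=> x y hxy; apply: NNPP => hn.
  have hnx : ~ J x by move=> h; apply: hn; left.
  have hny : ~ J y by move=> h; apply: hn; right.
  case: (ext x hnx) => z1 [j1 [F1 J1 l1]].
  case: (ext y hny) => z2 [j2 [F2 J2 l2]].
  apply: (JF (z1 `&` z2)); last exact: Fm.
  apply: (Jd _ ((j1 `|` j2) `|` (x `&` y))); first by apply: (Jj) => //; exact: Jj.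
  rewrite joinIr; apply: leI2.
    apply: (le_trans l1); apply: leU2 => //; exact: leUl.
  apply: (le_trans l2); apply: leU2 => //; exact: leUr.
Qed.
End PITsec.

Definition enc (o : option (nat * seq nat)) : Pt :=
  match o with None => Pp | Some (x, s) => Pn x s end.
Definition dec (p : Pt) : option (nat * seq nat) :=
  match p with Pp => None | Pn x s => Some (x, s) end.
Definition enum_pt (n : nat) : Pt :=
  match @pickle_inv (option (nat * seq nat)) n with Some o => enc o | None => Pp end.
Lemma enum_pt_surj q : enum_pt (pickle (dec q)) = q.
Proof. by rewrite /enum_pt pickleK_inv; case: q. Qed.

Section Main.
Context {d : Order.disp_t} {L : tbDistrLatticeType d} (f : Pt -> L -> Prop)
  (fprime : forall x, prime_ideal (f x))
  (fsurj : forall I : L -> Prop, prime_ideal I -> exists x, forall a, I a <-> f x a)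
  (ford : forall x y, Ple x y <-> (forall a, f x a -> f y a)).

Lemma fle {x y a} : Ple x y -> f x a -> f y a.
Proof. by move=> /ford; apply. Qed.
Lemma lef {x y} : (forall a, f x a -> f y a) -> Ple x y.
Proof. by move=> h; apply/ford. Qed.

Lemma lim_even v i b : ~~ odd (size v) -> f (pp v i) b ->
  exists j0, forall j, (j0 <= j)%N -> f (pp (rcons v i) j) b.
Proof.
move=> hv hb.
have hT : odd (size (rcons v i)) by rewrite size_rcons /=.
pose U := fun c => exists j, f (pp (rcons v i) j) c.
have mono : forall j j' c, (j <= j')%N -> f (pp (rcons v i) j) c -> f (pp (rcons v i) j') c.
  by move=> j j' c hjj; apply: fle; apply: Sinc.
have pU : prime_ideal U.
  split.
  - move=> x y [j hj] hxy; exists j; case: (fprime (pp (rcons v i) j)) => hd _ _ _ _.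
    exact: hd hj hxy.
  - exists 0; by case: (fprime (pp (rcons v i) 0)).
  - move=> x y [j1 h1] [j2 h2]; exists (maxn j1 j2).
    case: (fprime (pp (rcons v i) (maxn j1 j2))) => _ _ hj _ _; apply: hj.
      exact: mono (leq_maxl _ _) h1.
    exact: mono (leq_maxr _ _) h2.
  - case=> j hj; by case: (fprime (pp (rcons v i) j)) => _ _ _ ht _.
  - move=> x y [j hj]; case: (fprime (pp (rcons v i) j)) => _ _ _ _ hp.
    by case: (hp _ _ hj) => h; [left|right]; exists j.
case: (fsurj _ pU) => z hz.
have hxz : Ple (pp v i) z.
  apply: L1 => // j; apply: lef => a ha; apply/hz; by exists j.
case: (proj2 (hz b) (fle hxz hb)) => j0 hj0.
exists j0 => j hj; exact: mono hj hj0.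
Qed.

Lemma lim_odd v i a : odd (size v) -> ~ f (pp v i) a ->
  exists j0, forall j, (j0 <= j)%N -> ~ f (pp (rcons v i) j) a.
Proof.
move=> hv ha.
have hT : ~~ odd (size (rcons v i)) by rewrite size_rcons /= hv.
pose V := fun c => forall j, f (pp (rcons v i) j) c.
have mono : forall j j' c, (j <= j')%N -> f (pp (rcons v i) j') c -> f (pp (rcons v i) j) c.
  by move=> j j' c hjj; apply: fle; apply: Sdec.
have pV : prime_ideal V.
  split.
  - move=> x y hy hxy j; case: (fprime (pp (rcons v i) j)) => hd _ _ _ _.
    exact: hd (hy j) hxy.
  - move=> j; by case: (fprime (pp (rcons v i) j)).
  - move=> x y hx hy j; case: (fprime (pp (rcons v i) j)) => _ _ hj _ _; exact: hj.
  - move=> h; by case: (fprime (pp (rcons v i) 0)) => _ _ _ ht _; apply: ht.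
  - move=> x y hxy; apply: NNPP => hn.
    have [j1 h1] : exists j, ~ f (pp (rcons v i) j) x.
      by apply: NNPP => h; apply: hn; left => j; apply: NNPP => h'; apply: h; exists j.
    have [j2 h2] : exists j, ~ f (pp (rcons v i) j) y.
      by apply: NNPP => h; apply: hn; right => j; apply: NNPP => h'; apply: h; exists j.
    case: (fprime (pp (rcons v i) (maxn j1 j2))) => _ _ _ _ hp.
    case: (hp _ _ (hxy _)) => h.
      by apply: h1; exact: mono (leq_maxl _ _) h.
    by apply: h2; exact: mono (leq_maxr _ _) h.
case: (fsurj _ pV) => z hz.
have hzx : Ple z (pp v i).
  apply: L2 => // j; apply: lef => c hc; exact: (proj2 (hz c) hc j).
have [j0 hj0] : exists j, ~ f (pp (rcons v i) j) a.
  apply: NNPP => h; apply: ha; apply: (fle hzx); apply/hz => j.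
  by apply: NNPP => h'; apply: h; exists j.
exists j0 => j hj hf; apply: hj0; exact: mono hj hf.
Qed.

Definition sat1 (y : Pt) (p : L * bool) : Prop := if p.2 then f y p.1 else ~ f y p.1.
Fixpoint satC (y : Pt) (C : seq (L * bool)) : Prop :=
  match C with [::] => True | p :: C' => sat1 y p /\ satC y C' end.

Lemma lim1 v i p : sat1 (pp v i) p ->
  exists j0, forall j, (j0 <= j)%N -> sat1 (pp (rcons v i) j) p.
Proof.
case: p => c [] /=; case hv: (odd (size v)) => h.
- by exists 0 => j _; apply: fle h; apply: child_ge; rewrite hv.
- by apply: lim_even; rewrite ?hv.
- exact: lim_odd.
- by exists 0 => j _ hf; apply: h; apply: fle hf; apply: child_le; rewrite hv.
Qed.

Lemma limC v i C : satC (pp v i) C ->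
  exists j0, forall j, (j0 <= j)%N -> satC (pp (rcons v i) j) C.
Proof.
elim: C => [|p C IH] /=; first by exists 0.
case=> /lim1 [j1 h1] /IH [j2 h2]; exists (maxn j1 j2) => j hj; split.
  apply: h1; exact: leq_trans (leq_maxl _ _) hj.
apply: h2; exact: leq_trans (leq_maxr _ _) hj.
Qed.

Lemma step v i C q : satC (pp v i) C ->
  exists v' i' c b, satC (pp v' i') ((c, b) :: C) /\ ~ sat1 q (c, b).
Proof.
move=> /limC [j0 hj0].
have [j [hjC hne]] : exists j, satC (pp (rcons v i) j) C /\ ~ (forall a, f (pp (rcons v i) j) a <-> f q a).
  apply: NNPP => hn.
  have e0 : forall a, f (pp (rcons v i) j0) a <-> f q a.
    move=> a; apply: NNPP => h; apply: hn; exists j0; split; [exact: hj0|by move/(_ a)].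
  have e1 : forall a, f (pp (rcons v i) j0.+1) a <-> f q a.
    move=> a; apply: NNPP => h; apply: hn; exists j0.+1; split; [apply: hj0; exact: leqnSn|by move/(_ a)].
  case hv: (odd (size v)).
  - apply: (nrel_dn v i j0 hv); apply: lef => a /e0 /e1; done.
  - apply: (nrel_up v i j0 (negbT hv)); apply: lef => a /e1 /e0; done.
have [a ha] : exists a, ~ (f (pp (rcons v i) j) a <-> f q a).
  by apply: NNPP => h; apply: hne => a; apply: NNPP => h'; apply: h; exists a.
case: (classic (f (pp (rcons v i) j) a)) => hy.
- exists (rcons v i), j, a, true; split; first by split.
  move=> /= hq; apply: ha; split => h; [exact: hq | exact: hy].
- exists (rcons v i), j, a, false; split; first by split.
  move=> /= hq; apply: ha; split => h; [by case: hy | by case: hq].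
Qed.


Definition St := (seq nat * nat * seq (L * bool))%type.
Definition pt (st : St) := pp st.1.1 st.1.2.
Definition valid (st : St) := satC (pt st) st.2.
Definition Gprop (k : nat) (st st' : St) := valid st -> valid st' /\ exists c b, (st'.2 = (c, b) :: st.2) /\ ~ sat1 (enum_pt k) (c, b).

Lemma Gex k st : exists st', Gprop k st st'.
Proof.
case: (classic (valid st)) => h; last by exists st.
case: (step _ _ _ (enum_pt k) h) => v' [i' [c [b [h1 h2]]]].
exists (v', i', (c, b) :: st.2) => _; split => //; by exists c, b.
Qed.

Definition G k st := epsilon (inhabits st) (Gprop k st).
Lemma GP k st : Gprop k st (G k st).
Proof. exact: (epsilon_spec (inhabits st) _ (Gex k st)). Qed.

Fixpoint sq n : St := match n with 0 => ([::], 0, [::]) | n'.+1 => G n' (sq n') end.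

Lemma sq_valid n : valid (sq n).
Proof. elim: n => [|n IH] //=; by case: (GP n (sq n) IH). Qed.

Lemma sq_suffix m n : exists pre, (sq (m + n)).2 = pre ++ (sq m).2.
Proof.
elim: n => [|n [pre IH]]; first by exists [::]; rewrite addn0.
rewrite addnS /=; case: (GP (m + n) (sq (m + n)) (sq_valid _)) => _ [c [b [E _]]].
by exists ((c, b) :: pre); rewrite E IH.
Qed.

Lemma satC_cat y pre C : satC y (pre ++ C) -> satC y C.
Proof. by elim: pre => [|p pre IH] //= [_ /IH]. Qed.

Lemma persist k : exists c b, ~ sat1 (enum_pt k) (c, b) /\ forall n, (k < n)%N -> sat1 (pt (sq n)) (c, b).
Proof.
case: (GP k (sq k) (sq_valid k)) => _ [c [b [E hn]]].
exists c, b; split => // n hkn.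
have := sq_suffix k.+1 (n - k.+1); rewrite subnKC // => -[pre Epre].
have := sq_valid n; rewrite /valid Epre => /satC_cat /=.
by rewrite [(sq k.+1).2]E => -[].
Qed.

Lemma contra : False.
Proof.
pose Ii c := exists K, forall n, (K <= n)%N -> f (pt (sq n)) c.
pose Fi c := exists K, forall n, (K <= n)%N -> ~ f (pt (sq n)) c.
have [J [pJ [IJ JF]]] : exists J, prime_ideal J /\ incl Ii J /\ (forall x, J x -> Fi x -> False).
  apply: PIT.
  - move=> x y [K hK] hxy; exists K => n hn.
    by case: (fprime (pt (sq n))) => hd _ _ _ _; apply: hd (hK n hn) hxy.
  - by exists 0 => n _; case: (fprime (pt (sq n))).
  - move=> x y [K1 h1] [K2 h2]; exists (maxn K1 K2) => n hn.
    case: (fprime (pt (sq n))) => _ _ hj _ _; apply: hj.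
      apply: h1; exact: leq_trans (leq_maxl _ _) hn.
    apply: h2; exact: leq_trans (leq_maxr _ _) hn.
  - move=> x y [K hK] hxy; exists K => n hn hy.
    case: (fprime (pt (sq n))) => hd _ _ _ _; exact: hK n hn (hd _ _ hy hxy).
  - by exists 0 => n _; case: (fprime (pt (sq n))).
  - move=> x y [K1 h1] [K2 h2]; exists (maxn K1 K2) => n hn hxy.
    case: (fprime (pt (sq n))) => _ _ _ _ hp; case: (hp _ _ hxy).
      apply: h1; exact: leq_trans (leq_maxl _ _) hn.
    apply: h2; exact: leq_trans (leq_maxr _ _) hn.
  - move=> x [K1 h1] [K2 h2].
    apply: (h2 (maxn K1 K2)); first exact: leq_maxr.
    apply: h1; exact: leq_maxl.
case: (fsurj _ pJ) => q hq.
case: (persist (pickle (dec q))) => c [b []]; rewrite enum_pt_surj => hn hall.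
case: b hn hall => /= hn hall.
- apply: hn; apply/hq; apply: IJ; exists (pickle (dec q)).+1 => n hn'; exact: hall.
- apply: (JF c); first by apply/hq; apply: NNPP.
  exists (pickle (dec q)).+1 => n hn'; exact: hall.
Qed.

End Main.

Theorem lemma2p6 : ~ representable Ple.
Proof.
case=> d [L [f [fp fs fo]]].
exact: (@contra _ _ f fp fs fo).
Qed.
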